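(* Let $h\in\mathbb N$ and let $F$ be an $h$-flipclass of $\mathfrak S_n$; let $e=|E(F)|$. Then there exists an $h$-flipclass $F'$ of $\mathfrak S_e$ that is isomorphic to $F$. In particular, if $F$ is irreducible, such an $F'$ may be found in $\mathfrak S_{h+1}$.
   Context: $\mathfrak S_n$ is the symmetric group on $[n]$, $T$ its transpositions, $\ell$ the length w.r.t. simple transpositions. The Bruhat graph $B(\mathfrak S_n)$ has an edge $x\xrightarrow{t}y$ iff $yx^{-1}=t\in T$ and $\ell(x)<\ell(y)$. $P_h(u,v)$ is the set of paths $u=x_0\to\cdots\to x_h=v$ of length $h$. Between two fixed vertices there are $0$ or $2$ paths of length $2$; each is the flip of the other. The $i$-th flip operator $f_i$ ($i\in[h-1]$) on $P_h(u,v)$ replaces $x_{i-1}\to x_i\to x_{i+1}$ by its flip; an $h$-flipclass of $\mathfrak S_n$ is an orbit of $\langle f_1,\dots,f_{h-1}\rangle$ on some $P_h(u,v)$. For a path $\Gamma$ with edge labels $t_1,\dots,t_h$, $G(\Gamma)$ is the undirected multigraph whose vertex set is $\{a\in[n]: t_i(a)\ne a \text{ for some } i\}$ with an edge (labelled $i$) between $a$ and $b$ whenever $t_i=(a,b)$. For a flipclass $F$, $E(F)$ denotes the vertex set of $G(\Gamma)$ for any $\Gamma\in F$ (it does not depend on $\Gamma$), and $F$ is irreducible if $G(\Gamma)$ is connected for $\Gamma\in F$ (again independent of $\Gamma$). Isomorphism: for an $h$-flipclass $F$ of $\mathfrak S_n$ and an $h$-flipclass $F'$ of $\mathfrak S_m$,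 an isomorphism from $F$ to $F'$ is a pair $(f,g)$ where $f$ is a bijection from the set of permutations occurring on paths of $F$ onto the set of permutations occurring on paths of $F'$ such that applying $f$ vertexwise gives a bijection $F\to F'$ commuting with the flip operators $f_i$; $g$ is a bijection from the set of transpositions labelling edges of paths of $F$ onto the corresponding set for $F'$, such that whenever $\Gamma\in F$ has label sequence $(t_1,\dots,t_h)$, its image has label sequence $(g(t_1),\dots,g(t_h))$; and $g$ is order-preserving for the lexicographic orders on transpositions (writing transpositions as $(a,b)$ with $a<b$, $(a,b)<(c,d)$ iff $a<c$, or $a=c$ and $b<d$). *)

(* Defs.v *)
From mathcomp Require Import all_boot all_fingroup.
Set Implicit Arguments. Unset Strict Implicit. Unset Printing Implicit Defensive.
Local Open Scope group_scope.

(* Permutations of [n] are 'S_n = {perm 'I_n}.  MathComp composes left to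
   right: (x * y) i = y (x i).  Hence the paper's y x^{-1} (functions) is
   x^-1 * y here. *)

Definition is_transp n (t : 'S_n) : bool :=
  [exists a : 'I_n, exists b : 'I_n, (a != b) && (t == tperm a b)].

(* Coxeter length = number of inversions *)
Definition ell n (x : 'S_n) : nat :=
  #|[set p : 'I_n * 'I_n | (p.1 < p.2)%N && (x p.2 < x p.1)%N]|.

Definition bedge n (x y : 'S_n) : bool := is_transp (x^-1 * y) && (ell x < ell y)%N.

Definition vtx n h (G : (h.+1).-tuple 'S_n) (j : nat) : 'S_n := nth 1 G j.

Definition is_bpath n h (G : (h.+1).-tuple 'S_n) : Prop :=
  forall j : 'I_h, bedge (vtx G j) (vtx G j.+1).

(* label t_{j+1} = x_{j+1} x_j^{-1} of the (j+1)-th edge, j < h *)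
Definition label n h (G : (h.+1).-tuple 'S_n) (j : nat) : 'S_n :=
  (vtx G j)^-1 * vtx G j.+1.

Definition flip_at n h (i : nat) (G : (h.+1).-tuple 'S_n) : (h.+1).-tuple 'S_n :=
  if (0 < i < h)%N then
    match [pick z | (z != vtx G i) && bedge (vtx G i.-1) z && bedge z (vtx G i.+1)] with
    | Some z => [tuple (if (j : nat) == i then z else tnth G j) | j < h.+1]
    | None => G
    end
  else G.

Definition flips n h (s : seq nat) (G : (h.+1).-tuple 'S_n) : (h.+1).-tuple 'S_n :=
  foldl (fun G' i => flip_at i G') G s.

Definition is_flipclass n h (F : {set (h.+1).-tuple 'S_n}) : Prop :=
  exists G0, is_bpath G0 /\
    forall G, G \in F <-> exists s : seq nat, all (fun i => 0 < i < h)%N s /\ G = flips s G0.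

Definition verts n h (F : {set (h.+1).-tuple 'S_n}) : {set 'S_n} :=
  [set x | [exists G in F, x \in (G : seq 'S_n)]].

Definition labels n h (F : {set (h.+1).-tuple 'S_n}) : {set 'S_n} :=
  [set t | [exists G in F, [exists j : 'I_h, t == label G j]]].

Definition tlex_lt n (t1 t2 : 'S_n) : Prop :=
  exists a1 b1 a2 b2 : 'I_n,
    (a1 < b1)%N /\ (a2 < b2)%N /\ t1 = tperm a1 b1 /\ t2 = tperm a2 b2 /\
    ((a1 < a2)%N \/ ((a1 : nat) = a2 /\ (b1 < b2)%N)).

Definition flip_iso n m h (F : {set (h.+1).-tuple 'S_n})
    (F' : {set (h.+1).-tuple 'S_m}) : Prop :=
  exists (f : 'S_n -> 'S_m) (g : 'S_n -> 'S_m),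
    [/\ {in verts F &, injective f}, f @: verts F = verts F' &
        [set map_tuple f G | G in F] = F'] /\
    (forall G i, G \in F -> (0 < i < h)%N ->
        map_tuple f (flip_at i G) = flip_at i (map_tuple f G)) /\
    [/\ {in labels F &, injective g}, g @: labels F = labels F',
        (forall G (j : 'I_h), G \in F -> label (map_tuple f G) j = g (label G j)) &
        {in labels F &, forall t1 t2, tlex_lt t1 t2 -> tlex_lt (g t1) (g t2)}].

Definition Eset n h (G : (h.+1).-tuple 'S_n) : {set 'I_n} :=
  [set a | [exists j : 'I_h, label G j a != a]].

Definition Gadj n h (G : (h.+1).-tuple 'S_n) : rel 'I_n :=
  fun a b => (a != b) && [exists j : 'I_h, label G j == tperm a b].

Definition Gconnected n h (G : (h.+1).-tuple 'S_n) : Prop :=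
  {in Eset G &, forall a b, connect (Gadj G) a b}.

(* Main.v *)
Require Import Defs.
From mathcomp Require Import all_boot all_fingroup zify.
Set Implicit Arguments. Unset Strict Implicit. Unset Printing Implicit Defensive.
Local Open Scope group_scope.

Lemma tperm_moves (T : finType) (a b c : T) : tperm a b c != c -> c = a \/ c = b.
Proof.
case: (tpermP a b c) => [->|->|]; rewrite ?eqxx //; by [left|right].
Qed.

Lemma tperm_eval n (y : 'S_n) (i j k : 'I_n) :
  tperm (y i) (y j) (y k) = y (tperm i j k).
Proof.
case: (tpermP i j k) => [->|->|Hi Hj]; rewrite ?tpermL ?tpermR //.
by rewrite tpermD // (inj_eq perm_inj); apply/eqP => E; [apply: Hi|apply: Hj].
Qed.

Definition Invs n (y : 'S_n) := [set p : 'I_n * 'I_n | (p.1 < p.2)%N && (y p.2 < y p.1)%N].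

Lemma ellE n (y : 'S_n) : ell y = #|Invs y|.
Proof. by []. Qed.

Lemma ell_core n (y : 'S_n) (i j : 'I_n) : (i < j)%N -> (y i < y j)%N ->
  (ell y < ell (y * tperm (y i) (y j)))%N.
Proof.
move=> ij yij.
set y' := y * _.
have y'E k : y' k = y (tperm i j k) by rewrite permM tperm_eval.
pose tau := tperm i j.
pose phi (p : 'I_n * 'I_n) := if (tau p.1 < tau p.2)%N then (tau p.1, tau p.2) else p.
have ijI : (i, j) \in Invs y'.
  by rewrite inE /= !y'E tpermL tpermR ij yij.
have sub : phi @: Invs y \subset Invs y' :\ (i, j).
  apply/subsetP => q /imsetP [[k l]]; rewrite inE /= => /andP [kl ylk] ->.
  rewrite /phi /=; case: ifP => H.
    rewrite !inE /= !y'E !tpermK ylk H /= andbT.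
    apply/negP => /eqP [] Hk Hl.
    have : k = j by rewrite -[k](tpermK i j) /tau Hk tpermL.
    have : l = i by rewrite -[l](tpermK i j) /tau Hl tpermR.
    by move=> El Ek; move: kl; rewrite El Ek ltnNge (ltnW ij).
  rewrite !inE /= !y'E kl /=.
  move: H; rewrite /tau.
  case: (tpermP i j k) => [Ek|Ek|Eki Ekj]; case: (tpermP i j l) => [El|El|Eli Elj];
    subst => // H.
  - by rewrite ltnn in kl.
  - by move: (ltn_trans ylk yij); rewrite ltnn.
  - apply/andP; split; last exact: ltn_trans ylk yij.
    by apply/negP => /eqP [] E; apply: Elj.
  - by move: (ltn_trans ij kl); rewrite ltnn.
  - by rewrite ltnn in kl.
  - by rewrite (ltn_trans ij kl) in H.
  - by rewrite (ltn_trans kl ij) in H.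
  - apply/andP; split; last exact: ltn_trans yij ylk.
    by apply/negP => /eqP [] E; apply: Eki.
  - by rewrite kl in H.
have inj : {in Invs y &, injective phi}.
  move=> [k1 l1] [k2 l2]; rewrite !inE /= => /andP [kl1 _] /andP [kl2 _].
  rewrite /phi /=; case: ifP => H1; case: ifP => H2 [] E1 E2.
  - by rewrite -[k1](tpermK i j) -[l1](tpermK i j) -/tau E1 E2 !tpermK.
  - by move: H2; rewrite -E1 -E2 !tpermK kl1.
  - by move: H1; rewrite E1 E2 !tpermK kl2.
  - by rewrite E1 E2.
rewrite !ellE -(card_in_imset inj).
apply: (leq_ltn_trans (subset_leq_card sub)).
by rewrite [X in (_ < X)%N](cardsD1 (i, j)) ijI.
Qed.

Lemma ell_pos n (y : 'S_n) (i j : 'I_n) : (i < j)%N ->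
  (ell y < ell (y * tperm (y i) (y j)))%N = (y i < y j)%N.
Proof.
move=> ij; case: (ltngtP (y i) (y j)) => H.
- exact: ell_core.
- set y' := y * _.
  have y'i : y' i = y j by rewrite permM tpermL.
  have y'j : y' j = y i by rewrite permM tpermR.
  have := ell_core (y := y') ij; rewrite y'i y'j => /(_ H).
  rewrite /y' -mulgA tpermC; have tt : forall (T : finType) (u v : T), tperm u v * tperm u v = 1 by move=> T u v; apply/permP => w; rewrite permM tpermK perm1.
  rewrite tt mulg1.
  by move=> /ltnW; rewrite leqNgt => /negbTE.
- by move/val_inj/perm_inj: H => E; rewrite E ltnn in ij.
Qed.

Lemma ell_tperm n (y : 'S_n) (a b : 'I_n) : a != b ->
  (ell y < ell (y * tperm a b))%N = ((a < b)%N == (y^-1 a < y^-1 b)%N).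
Proof.
move=> ab.
have Ea : y (y^-1 a) = a by rewrite permKV.
have Eb : y (y^-1 b) = b by rewrite permKV.
case: (ltngtP (y^-1 a) (y^-1 b)) => H.
- by rewrite -{1}Ea -{1}Eb ell_pos // Ea Eb eqb_id.
- rewrite tpermC -{1}Ea -{1}Eb ell_pos // Ea Eb.
  case: (ltngtP a b) => // E; move/val_inj: E => E; by rewrite E eqxx in ab.
- by move/val_inj/perm_inj: H => E; rewrite E eqxx in ab.
Qed.

Lemma tperm_sq (T : finType) (u v : T) : tperm u v * tperm u v = 1.
Proof. by apply/permP => w; rewrite permM tpermK perm1. Qed.

Lemma is_transp_tperm n (a b : 'I_n) : is_transp (tperm a b) = (a != b).
Proof.
apply/idP/idP; last by move=> ab; apply/existsP; exists a; apply/existsP; exists b; rewrite ab eqxx.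
move=> /existsP [c /existsP [d /andP [cd /eqP E]]].
apply/negP => /eqP ab; move: E; rewrite ab tperm1 => /permP /(_ c).
by rewrite perm1 tpermL => E'; rewrite E' eqxx in cd.
Qed.

Lemma transp_det n (t : 'S_n) (a b : 'I_n) : is_transp t -> t a = b -> a != b -> t = tperm a b.
Proof.
move=> /existsP [c /existsP [d /andP [cd /eqP ->]]] tab ab.
have : tperm c d a != a by rewrite tab eq_sym.
case/tperm_moves => Ea; move: tab; rewrite Ea ?tpermL ?tpermR => <- //.
by rewrite tpermC.
Qed.

Lemma tperm_pair n (a b c d : 'I_n) : a != b -> tperm a b = tperm c d ->
  (a = c /\ b = d) \/ (a = d /\ b = c).
Proof.
move=> ab E.
have H : tperm c d a = b by rewrite -E tpermL.
have : tperm c d a != a by rewrite H eq_sym.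
case/tperm_moves => Ea; move: H; rewrite Ea ?tpermL ?tpermR => H; by [left|right].
Qed.

Lemma supp_prod n (s s' : 'S_n) (a : 'I_n) : is_transp s -> is_transp s' -> s * s' != 1 ->
  ((s a != a) || (s' a != a)) = ((s * s') a != a).
Proof.
move=> ts ts' ss; rewrite permM.
apply/idP/idP; last first.
  by apply: contraLR; rewrite negb_or !negbK => /andP [/eqP -> /eqP ->].
case: (eqVneq (s a) a) => [-> //|sa _].
apply/negP => /eqP E.
have Es : s = tperm a (s a) by apply: transp_det; rewrite // eq_sym.
have Es' : s' = tperm a (s a).
  by rewrite tpermC; apply: transp_det => //.
by move: ss; rewrite {1}Es Es' tperm_sq eqxx.
Qed.

Lemma no3 (x0 x1 x2 : nat) : x0 != x1 -> x1 != x2 -> x0 != x2 ->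
  (x0 < x1)%N = (x2 < x1)%N -> (x1 < x2)%N = (x0 < x2)%N -> (x2 < x0)%N = (x1 < x0)%N -> False.
Proof. move=> *. lia. Qed.

Lemma bedge_tperm n (x : 'S_n) (a b : 'I_n) :
  bedge x (x * tperm a b) = (a != b) && ((a < b)%N == (x^-1 a < x^-1 b)%N).
Proof.
rewrite /bedge mulKg is_transp_tperm.
by case: (eqVneq a b) => [->|ab] //=; rewrite ell_tperm.
Qed.

Lemma bedge_transp n (x y : 'S_n) : bedge x y -> exists a b, a != b /\ y = x * tperm a b.
Proof.
move=> /andP [/existsP [a /existsP [b /andP [ab /eqP E]]] _].
by exists a, b; split => //; rewrite -E mulKVg.
Qed.

Lemma bedge_lt n (x y : 'S_n) : bedge x y -> (ell x < ell y)%N.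
Proof. by case/andP. Qed.

Lemma mid_factor n (X W z : 'S_n) : bedge X z -> bedge z W ->
  exists k, (X^-1 * W) k != k /\ z = X * tperm k ((X^-1 * W) k).
Proof.
move=> e1 e2.
have p1 : X^-1 * W != 1.
  apply/negP => /eqP E; have : W = X by rewrite -[W](mulKVg X) E mulg1.
  move=> EW; move: (ltn_trans (bedge_lt e1) (bedge_lt e2)); by rewrite EW ltnn.
case: (bedge_transp e1) => a [b [ab Ez]].
have ts' : is_transp (z^-1 * W) by case/andP: e2.
have Ep : X^-1 * W = tperm a b * (z^-1 * W) by rewrite Ez invMg tpermV !mulgA tperm_sq mul1g.
have pa : (X^-1 * W) a = (z^-1 * W) b by rewrite Ep permM tpermL.
have pb : (X^-1 * W) b = (z^-1 * W) a by rewrite Ep permM tpermR.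
case: (eqVneq ((z^-1 * W) b) b) => sb.
  by exists a; rewrite pa sb; split => //; rewrite eq_sym.
case: (eqVneq ((z^-1 * W) a) a) => sa.
  by exists b; rewrite pb sa tpermC; split.
have Es : z^-1 * W = tperm a ((z^-1 * W) a) by apply: transp_det; rewrite // eq_sym.
move: sb; rewrite {1}Es => /tperm_moves [Eb|Eb]; first by rewrite Eb eqxx in ab.
by move: p1; rewrite Ep Es -Eb tperm_sq eqxx.
Qed.

Lemma cycle3 n (p : 'S_n) (a b d : 'I_n) : p a = b -> p b = d -> p d = a ->
  a != b -> b != d -> a != d -> (forall m, m != a -> m != b -> m != d -> p m = m) ->
  p = tperm a b * tperm a d.
Proof.
move=> pa pb pd ab bd ad fx; apply/permP => m; rewrite permM.
case: (tpermP a b m) => [->|->|ma mb].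
- by rewrite tpermD // eq_sym.
- by rewrite tpermL.
- case: (eqVneq m d) => [->|md]; first by rewrite tpermR.
  have ma' : m != a by apply/eqP. have mb' : m != b by apply/eqP.
  by rewrite tpermD ?fx // eq_sym.
Qed.

Lemma Vfacts n (X W : 'S_n) (a b d : 'I_n) : a != b -> a != d -> b != d ->
  bedge X (X * tperm a b) -> bedge (X * tperm a b) W -> W = X * tperm a b * tperm a d ->
  ((a < b)%N == (X^-1 a < X^-1 b)%N) && ((a < d)%N == (X^-1 b < X^-1 d)%N).
Proof.
move=> ab ad bd e1 e2 EW.
rewrite bedge_tperm in e1; case/andP: e1 => _ ->.
move: e2; rewrite EW bedge_tperm => /andP [_].
by rewrite invMg tpermV !permM tpermL tpermD // eq_sym.
Qed.

Lemma mid_unique n (X W z0 z1 z2 : 'S_n) :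
  bedge X z0 -> bedge z0 W -> bedge X z1 -> bedge z1 W -> bedge X z2 -> bedge z2 W ->
  z0 != z1 -> z0 != z2 -> z1 != z2 -> False.
Proof.
move=> a0 b0 a1 b1 a2 b2 d01 d02 d12.
set p := X^-1 * W.
have [k0 [pk0 E0]] := mid_factor a0 b0.
have [k1 [pk1 E1]] := mid_factor a1 b1.
have [k2 [pk2 E2]] := mid_factor a2 b2.
rewrite -/p in pk0 E0 pk1 E1 pk2 E2.
have sE (k : 'I_n) : (X * tperm k (p k))^-1 * W = tperm k (p k) * p.
  by rewrite invMg tpermV -mulgA.
have tr0 : is_transp (tperm k0 (p k0) * p) by rewrite -sE -E0; case/andP: b0.
case: (eqVneq (p (p k0)) k0) => [ppk0|ppk0].
  set s' := tperm k0 (p k0) * p.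
  have cl k : p k != k -> tperm k (p k) = tperm k0 (p k0) \/ tperm k (p k) = s'.
    move=> pk.
    case: (eqVneq k k0) => [->|kk0]; first by left.
    case: (eqVneq k (p k0)) => [->|kpk0]; first by left; rewrite ppk0 tpermC.
    right; symmetry; apply: transp_det => //; last by rewrite eq_sym.
    by rewrite /s' permM tpermD // eq_sym.
  have ne (kj : 'I_n) zj : zj = X * tperm kj (p kj) -> z0 != zj ->
      tperm kj (p kj) != tperm k0 (p k0).
    by move=> -> ; apply: contra => /eqP ->; rewrite E0.
  case: (cl _ pk1) => H1; first by move: (ne _ _ E1 d01); rewrite H1 eqxx.
  case: (cl _ pk2) => H2; first by move: (ne _ _ E2 d02); rewrite H2 eqxx.
  by move: d12; rewrite E1 E2 H1 H2 eqxx.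
set c0 := k0; set c1 := p k0; set c2 := p c1.
have d01' : c0 != c1 by rewrite eq_sym.
have d02' : c0 != c2 by rewrite eq_sym.
have d12' : c1 != c2.
  apply/negP => /eqP E; have : p c1 = p c0 by rewrite -[p c1]/c2 -E.
  by move/perm_inj => E'; rewrite E' eqxx in d01'.
set s' := tperm k0 (p k0) * p.
have Es' : s' = tperm c0 c2.
  by apply: transp_det => //; rewrite /s' permM tpermL.
have pc2 : p c2 = c0.
  have : s' c2 = c0 by rewrite Es' tpermR.
  by rewrite /s' permM tpermD // eq_sym.
have fx m : m != c0 -> m != c1 -> m != c2 -> p m = m.
  move=> m0 m1 m2.
  have : s' m = m by rewrite Es' tpermD // eq_sym.
  by rewrite /s' permM tpermD // eq_sym.
have Pc : p = tperm c0 c1 * tperm c0 c2 by apply: cycle3.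
have inorb k : p k != k -> [\/ k = c0, k = c1 | k = c2].
  move=> pk; case: (eqVneq k c0) => [->|h0]; first by constructor 1.
  case: (eqVneq k c1) => [->|h1]; first by constructor 2.
  case: (eqVneq k c2) => [->|h2]; first by constructor 3.
  by rewrite fx ?eqxx in pk.
have V (a b d : 'I_n) (z : 'S_n) : z = X * tperm a b -> bedge X z -> bedge z W ->
    a != b -> a != d -> b != d -> p = tperm a b * tperm a d ->
    ((a < b)%N == (X^-1 a < X^-1 b)%N) && ((a < d)%N == (X^-1 b < X^-1 d)%N).
  move=> Ez e1 e2 ab ad bd Ep; apply: (@Vfacts _ X W) => //; rewrite -?Ez //.
  by rewrite Ez -mulgA -Ep mulKVg.
have P1 : p = tperm c1 c2 * tperm c1 c0.
  apply: cycle3 => //; rewrite ?(eq_sym c2 c0) ?(eq_sym c1 c0) //.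
  by move=> m m1 m2 m0; apply: fx.
have P2 : p = tperm c2 c0 * tperm c2 c1.
  apply: cycle3 => //; rewrite ?(eq_sym c2 c0) ?(eq_sym c1 c0) ?(eq_sym c2 c1) //.
  by move=> m m2 m0 m1; apply: fx.
have pc1 : p c1 = c2 by [].
have pc0 : p c0 = c1 by [].
have V0 := V c0 c1 c2 z0 E0 a0 b0 d01' d02' d12' Pc.
have Vk (k : 'I_n) z : z = X * tperm k (p k) -> bedge X z -> bedge z W -> k != c0 ->
   p k != k -> 
   (k = c1 /\ ((c1 < c2)%N == (X^-1 c1 < X^-1 c2)%N) && ((c1 < c0)%N == (X^-1 c2 < X^-1 c0)%N)) \/
   (k = c2 /\ ((c2 < c0)%N == (X^-1 c2 < X^-1 c0)%N) && ((c2 < c1)%N == (X^-1 c0 < X^-1 c1)%N)).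
  move=> Ez e1 e2 kc0 pk; case: (inorb k pk) => Ek; first by rewrite Ek eqxx in kc0.
    left; split => //; rewrite Ek pc1 in Ez; apply: (V _ _ _ _ Ez) => //; by rewrite eq_sym.
  right; split => //; rewrite Ek pc2 in Ez; apply: (V _ _ _ _ Ez) => //; by rewrite eq_sym.
have k1c0 : k1 != c0 by apply: contra d01 => /eqP Ek; rewrite E0 E1 Ek.
have k2c0 : k2 != c0 by apply: contra d02 => /eqP Ek; rewrite E0 E2 Ek.
have VV : (((c1 < c2)%N == (X^-1 c1 < X^-1 c2)%N) && ((c1 < c0)%N == (X^-1 c2 < X^-1 c0)%N)) &&
          (((c2 < c0)%N == (X^-1 c2 < X^-1 c0)%N) && ((c2 < c1)%N == (X^-1 c0 < X^-1 c1)%N)).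
  case: (Vk _ _ E1 a1 b1 k1c0 pk1) => [[Ek1 H1]|[Ek1 H1]];
  case: (Vk _ _ E2 a2 b2 k2c0 pk2) => [[Ek2 H2]|[Ek2 H2]]; rewrite ?H1 ?H2 //;
  by move: d12; rewrite E1 E2 Ek1 Ek2 eqxx.
move: V0 VV => /andP [/eqP A0 /eqP B0] /andP [/andP [/eqP A1 /eqP B1] /andP [/eqP A2 /eqP B2]].
apply: (@no3 c0 c1 c2) => //.
- by rewrite A0 B2.
- by rewrite A1 B0.
- by rewrite A2 B1.
Qed.

Definition rk n (A : {set 'I_n}) (a : 'I_n) : nat := #|[set c in A | (c < a)%N]|.

Lemma rk_ltE n (A : {set 'I_n}) a b : a \in A -> b \in A ->
  (rk A a < rk A b)%N = (a < b)%N.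
Proof.
move=> aA bA; case: (ltnP a b) => ab.
  apply: proper_card; apply/properP; split.
    by apply/subsetP => c; rewrite !inE => /andP [-> ca]; apply: ltn_trans ca ab.
  by exists a; rewrite !inE ?aA ?ab ?ltnn.
rewrite ltnNge; apply/negbF; apply: subset_leq_card; apply/subsetP => c.
by rewrite !inE => /andP [-> cb]; apply: leq_trans cb ab.
Qed.

Lemma rk_inj n (A : {set 'I_n}) : {in A &, injective (rk A)}.
Proof.
move=> a b aA bA E; apply: ord_inj; case: (ltngtP a b) => // H.
- by move: H; rewrite -(rk_ltE aA bA) E ltnn.
- by move: H; rewrite -(rk_ltE bA aA) E ltnn.
Qed.

Lemma rk_bound n (A : {set 'I_n}) a : a \in A -> (rk A a < #|A|)%N.
Proof.
move=> aA; apply: proper_card; apply/properP; split.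
  by apply/subsetP => c; rewrite !inE => /andP [].
by exists a; rewrite // !inE ltnn andbF.
Qed.

Lemma rk_surj n (A : {set 'I_n}) r : (r < #|A|)%N -> exists2 a, a \in A & rk A a = r.
Proof.
move=> rA.
have U : uniq (map (rk A) (enum A)).
  rewrite map_inj_in_uniq ?enum_uniq //.
  by move=> a b; rewrite !mem_enum; apply: rk_inj.
have S : {subset map (rk A) (enum A) <= iota 0 #|A|}.
  by move=> k /mapP [a]; rewrite mem_enum mem_iota => aA ->; rewrite rk_bound.
have Sz : (size (iota 0 #|A|) <= size (map (rk A) (enum A)))%N.
  by rewrite size_iota size_map -cardE.
have [_ Eq] := uniq_min_size U S Sz.
have : r \in iota 0 #|A| by rewrite mem_iota.
by rewrite -Eq => /mapP [a]; rewrite mem_enum => aA ->; exists a.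
Qed.

Definition Pset n (E : {set 'I_n}) (x0 : 'S_n) : {set 'I_n} := [set x0^-1 c | c in E].

Definition gx n m (E : {set 'I_n}) (x0 x : 'S_n) (r : 'I_m) : 'I_m :=
  if [pick c in E | rk E c == r] is Some c then insubd r (rk (Pset E x0) (x^-1 c)) else r.

Definition pf n m (E : {set 'I_n}) (x0 x : 'S_n) : 'S_m :=
  odflt 1 [pick q : 'S_m | [forall r, q r == gx E x0 x r]].

Definition fm n m (E : {set 'I_n}) (x0 x : 'S_n) : 'S_m := (pf m E x0 x)^-1.

Definition inC n (E : {set 'I_n}) (x0 x : 'S_n) := forall c, c \notin E -> x^-1 c = x0^-1 c.

Lemma cardP n (E : {set 'I_n}) x0 : #|Pset E x0| = #|E|.
Proof. by rewrite card_imset //; apply: perm_inj. Qed.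

Lemma C_mem n (E : {set 'I_n}) x0 x c : inC E x0 x -> c \in E -> x^-1 c \in Pset E x0.
Proof.
move=> Cx cE; set d := x0 (x^-1 c).
have Ed : x0^-1 d = x^-1 c by rewrite /d permK.
case: (boolP (d \in E)) => dE; first by rewrite -Ed; apply: imset_f.
have := Cx _ dE; rewrite Ed => /perm_inj E'.
by move: cE; rewrite -E' (negbTE dE).
Qed.

Lemma pick_rk n (E : {set 'I_n}) (c : 'I_n) (r : nat) : c \in E -> rk E c = r ->
  [pick c' in E | rk E c' == r] = Some c.
Proof.
move=> cE Ec; case: pickP => [c' /andP [c'E /eqP Ec']|/(_ c)].
  by congr Some; apply: (rk_inj c'E cE); rewrite Ec Ec'.
by rewrite cE Ec eqxx.
Qed.

Lemma pick_rk_none n (E : {set 'I_n}) (r : nat) : (#|E| <= r)%N ->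
  [pick c' in E | rk E c' == r] = None.
Proof.
move=> Er; case: pickP => // c' /andP [c'E /eqP Ec'].
by move: (rk_bound c'E); rewrite Ec' ltnNge Er.
Qed.

Lemma gx_val n m (E : {set 'I_n}) x0 x c (r : 'I_m) : (#|E| <= m)%N -> inC E x0 x -> c \in E ->
  (r : nat) = rk E c -> (gx E x0 x r : nat) = rk (Pset E x0) (x^-1 c).
Proof.
move=> hm Cx cE Er; rewrite /gx (pick_rk cE (esym Er)) val_insubd.
by rewrite (leq_trans (rk_bound (C_mem Cx cE))) // cardP.
Qed.

Lemma gx_out n m (E : {set 'I_n}) x0 x (r : 'I_m) : (#|E| <= r)%N -> gx E x0 x r = r.
Proof. by move=> Er; rewrite /gx pick_rk_none. Qed.

Lemma gx_inj n m (E : {set 'I_n}) x0 x : (#|E| <= m)%N -> inC E x0 x -> injective (gx (m:=m) E x0 x).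
Proof.
move=> hm Cx r1 r2.
case: (ltnP r1 #|E|) => h1; case: (ltnP r2 #|E|) => h2.
- have [c1 c1E E1] := rk_surj h1; have [c2 c2E E2] := rk_surj h2.
  move/(congr1 (@nat_of_ord m)); rewrite (gx_val hm Cx c1E (esym E1)) (gx_val hm Cx c2E (esym E2)).
  move/rk_inj => H; have {H} := H (C_mem Cx c1E) (C_mem Cx c2E).
  by move/perm_inj => Ec; apply: ord_inj; rewrite -E1 -E2 Ec.
- have [c1 c1E E1] := rk_surj h1; rewrite (gx_out x0 x h2) => /(congr1 (@nat_of_ord m)).
  rewrite (gx_val hm Cx c1E (esym E1)) => Er2; move: h2; rewrite -Er2 leqNgt.
  by rewrite -(cardP E x0) rk_bound // C_mem.
- have [c2 c2E E2] := rk_surj h2; rewrite (gx_out x0 x h1) => /(congr1 (@nat_of_ord m)).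
  rewrite (gx_val hm Cx c2E (esym E2)) => Er1; move: h1; rewrite Er1 leqNgt.
  by rewrite -(cardP E x0) rk_bound // C_mem.
- by rewrite !gx_out.
Qed.

Lemma pfE n m (E : {set 'I_n}) x0 x : (#|E| <= m)%N -> inC E x0 x ->
  forall r, pf m E x0 x r = gx E x0 x r.
Proof.
move=> hm Cx; rewrite /pf; case: pickP => [q /forallP H r|/(_ (perm (gx_inj hm Cx)))].
  by apply/eqP.
by move=> /negbT /negP []; apply/forallP => r; rewrite permE.
Qed.

Lemma fm_inj n m (E : {set 'I_n}) x0 x y : (#|E| <= m)%N -> inC E x0 x -> inC E x0 y ->
  fm m E x0 x = fm m E x0 y -> x = y.
Proof.
move=> hm Cx Cy /(congr1 (fun q => q^-1)); rewrite /fm !invgK => Epf.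
suff : x^-1 = y^-1 by move/(congr1 (fun q => q^-1)); rewrite !invgK.
apply/permP => c; case: (boolP (c \in E)) => cE; last by rewrite Cx ?Cy.
have cb := rk_bound cE; have [r Er] : exists r : 'I_m, (r : nat) = rk E c.
  by exists (Ordinal (leq_trans cb hm)).
have := congr1 (@nat_of_ord m) (congr1 (fun q : 'S_m => q r) Epf).
rewrite /= !pfE // (gx_val hm Cx cE Er) (gx_val hm Cy cE Er).
by move/rk_inj => H; apply: H; apply: C_mem.
Qed.

Lemma C_tperm n (E : {set 'I_n}) x0 x a b : inC E x0 x -> a \in E -> b \in E ->
  inC E x0 (x * tperm a b).
Proof.
move=> Cx aE bE c cE; rewrite invMg tpermV permM tpermD ?Cx //.
  by apply/eqP => E'; rewrite -E' aE in cE.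
by apply/eqP => E'; rewrite -E' bE in cE.
Qed.

Lemma fm_fix n m (E : {set 'I_n}) x0 x (r : 'I_m) : (#|E| <= m)%N -> inC E x0 x ->
  (#|E| <= r)%N -> fm m E x0 x r = r /\ (fm m E x0 x)^-1 r = r.
Proof.
move=> hm Cx Er.
have H : (fm m E x0 x)^-1 r = r by rewrite /fm invgK pfE // gx_out.
by split => //; rewrite -{1}H permKV.
Qed.

Lemma fm_tperm n m (E : {set 'I_n}) x0 x a b (r1 r2 : 'I_m) : (#|E| <= m)%N -> inC E x0 x ->
  a \in E -> b \in E -> (r1 : nat) = rk E a -> (r2 : nat) = rk E b ->
  fm m E x0 (x * tperm a b) = fm m E x0 x * tperm r1 r2.
Proof.
move=> hm Cx aE bE E1 E2.
have Cxt := C_tperm Cx aE bE.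
apply: invg_inj.
apply/permP => r; rewrite invMg tpermV /fm !invgK permM !pfE //.
case: (ltnP r #|E|) => hr; last first.
  rewrite tpermD ?gx_out //.
    by apply: contraTneq hr => <-; rewrite -ltnNge E1 rk_bound.
  by apply: contraTneq hr => <-; rewrite -ltnNge E2 rk_bound.
have [c cE Ec] := rk_surj hr.
have tcE : tperm a b c \in E by case: tpermP => _; rewrite ?aE ?bE ?cE.
have Etr : (tperm r1 r2 r : nat) = rk E (tperm a b c).
  case: (tpermP a b c) => [Eca|Ecb|ca cb].
  - have -> : r = r1 by apply: ord_inj; rewrite E1 -Ec Eca.
    by rewrite tpermL E2.
  - have -> : r = r2 by apply: ord_inj; rewrite E2 -Ec Ecb.
    by rewrite tpermR E1.
  - rewrite tpermD ?Ec //; apply/eqP => H.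
    + by apply: ca; apply: (rk_inj cE aE); rewrite Ec -H E1.
    + by apply: cb; apply: (rk_inj cE bE); rewrite Ec -H E2.
apply: ord_inj; rewrite (gx_val hm Cxt cE (esym Ec)) (gx_val hm Cx tcE Etr).
by rewrite invMg tpermV permM.
Qed.

Lemma ro n m (E : {set 'I_n}) a : (#|E| <= m)%N -> a \in E -> exists r : 'I_m, (r : nat) = rk E a.
Proof. by move=> hm aE; exists (Ordinal (leq_trans (rk_bound aE) hm)). Qed.

Lemma fm_lt n m (E : {set 'I_n}) x0 x a b (r1 r2 : 'I_m) : (#|E| <= m)%N -> inC E x0 x ->
  a \in E -> b \in E -> (r1 : nat) = rk E a -> (r2 : nat) = rk E b ->
  (((fm m E x0 x)^-1 r1 : nat) < (fm m E x0 x)^-1 r2)%N = (x^-1 a < x^-1 b)%N.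
Proof.
move=> hm Cx aE bE E1 E2; rewrite /fm invgK !pfE // (gx_val hm Cx aE E1) (gx_val hm Cx bE E2).
by rewrite rk_ltE // C_mem.
Qed.

Lemma bedge_fm n m (E : {set 'I_n}) x0 x a b (r1 r2 : 'I_m) : (#|E| <= m)%N -> inC E x0 x ->
  a \in E -> b \in E -> (r1 : nat) = rk E a -> (r2 : nat) = rk E b ->
  bedge x (x * tperm a b) = bedge (fm m E x0 x) (fm m E x0 x * tperm r1 r2).
Proof.
move=> hm Cx aE bE E1 E2; rewrite !bedge_tperm (fm_lt hm Cx aE bE E1 E2).
have -> : (r1 < r2)%N = (a < b)%N by rewrite E1 E2 rk_ltE.
congr (_ && _); apply/idP/idP => H; apply/eqP => Eq; move/eqP: H; apply.
- by apply: (rk_inj aE bE); rewrite -E1 -E2 Eq.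
- by apply: ord_inj; rewrite E1 E2 Eq.
Qed.

Lemma C_fix n (E : {set 'I_n}) x0 x y c : inC E x0 x -> inC E x0 y -> c \notin E ->
  (x^-1 * y) c = c.
Proof. by move=> Cx Cy cE; rewrite permM Cx // -(Cy _ cE) permKV. Qed.

Lemma fm_mulfix n m (E : {set 'I_n}) x0 x y (r : 'I_m) : (#|E| <= m)%N -> inC E x0 x -> inC E x0 y ->
  (#|E| <= r)%N -> ((fm m E x0 x)^-1 * fm m E x0 y) r = r.
Proof.
move=> hm Cx Cy hr; rewrite permM.
by have [_ ->] := fm_fix hm Cx hr; have [-> _] := fm_fix hm Cy hr.
Qed.

Lemma vtx_default n h (G : (h.+1).-tuple 'S_n) j : (h < j)%N -> vtx G j = 1.
Proof. by move=> hj; rewrite /vtx nth_default // size_tuple. Qed.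

Lemma vtx_map n m h (f : 'S_n -> 'S_m) (G : (h.+1).-tuple 'S_n) j : (j <= h)%N ->
  vtx (map_tuple f G) j = f (vtx G j).
Proof. by move=> jh; rewrite /vtx (nth_map 1) // size_tuple. Qed.

Definition midp n (X W Z : 'S_n) := fun z => (z != Z) && bedge X z && bedge z W.

Lemma flip_atE n h i (G : (h.+1).-tuple 'S_n) z : (0 < i < h)%N ->
  [pick z | midp (vtx G i.-1) (vtx G i.+1) (vtx G i) z] = Some z ->
  forall j, vtx (flip_at i G) j = if j == i then z else vtx G j.
Proof.
move=> ih Hp j; rewrite /flip_at ih.
have -> : [pick z | (z != vtx G i) && bedge (vtx G i.-1) z && bedge z (vtx G i.+1)] = Some z.
  by rewrite -Hp.
case: (ltnP h j) => hj.
  rewrite !vtx_default //; case: eqP => // E; move: ih; rewrite -E => /andP [_ ].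
  by rewrite ltnNge (ltnW hj).
rewrite /vtx -[j]/(nat_of_ord (Ordinal (hj : (j < h.+1)%N))) nth_mktuple /=.
by rewrite (tnth_nth 1).
Qed.

Lemma flip_atN n h i (G : (h.+1).-tuple 'S_n) : 
  [pick z | midp (vtx G i.-1) (vtx G i.+1) (vtx G i) z] = None -> flip_at i G = G.
Proof.
move=> Hp; rewrite /flip_at; case: ifP => // _.
have -> : [pick z | (z != vtx G i) && bedge (vtx G i.-1) z && bedge z (vtx G i.+1)] = None.
  by rewrite -Hp.
by [].
Qed.

Lemma flip_out n h i (G : (h.+1).-tuple 'S_n) : ~~ (0 < i < h)%N -> flip_at i G = G.
Proof. by rewrite /flip_at => /negbTE ->. Qed.

Definition Inv n h (E : {set 'I_n}) (x0 : 'S_n) (G : (h.+1).-tuple 'S_n) :=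
  [/\ is_bpath G, vtx G 0 = x0 & Eset G = E].

Lemma bpath_edge n h (G : (h.+1).-tuple 'S_n) j : is_bpath G -> (j < h)%N ->
  bedge (vtx G j) (vtx G j.+1).
Proof. by move=> bp jh; apply: (bp (Ordinal jh)). Qed.

Lemma vtxS n h (G : (h.+1).-tuple 'S_n) j : vtx G j.+1 = vtx G j * label G j.
Proof. by rewrite /label mulKVg. Qed.

Lemma label_tp n h (G : (h.+1).-tuple 'S_n) j : is_bpath G -> (j < h)%N ->
  exists a b, a != b /\ label G j = tperm a b.
Proof.
move=> bp jh; have [a [b [ab E]]] := bedge_transp (bpath_edge bp jh).
by exists a, b; split => //; rewrite /label E mulKg.
Qed.

Lemma label_inE n h (G : (h.+1).-tuple 'S_n) j a b : (j < h)%N -> label G j = tperm a b ->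
  a != b -> a \in Eset G /\ b \in Eset G.
Proof.
move=> jh E ab; split; rewrite inE; apply/existsP; exists (Ordinal jh); rewrite /= E.
  by rewrite tpermL eq_sym.
by rewrite tpermR.
Qed.

Lemma inC_refl n (E : {set 'I_n}) x0 : inC E x0 x0.
Proof. by []. Qed.

Lemma Inv_label n h (E : {set 'I_n}) x0 (G : (h.+1).-tuple 'S_n) j : Inv E x0 G -> (j < h)%N ->
  exists a b, [/\ a != b, a \in E, b \in E & label G j = tperm a b].
Proof.
case=> bp _ EE jh; have [a [b [ab Ej]]] := label_tp bp jh.
have [aE bE] := label_inE jh Ej ab.
by exists a, b; rewrite -EE.
Qed.

Lemma vtx_C n h (E : {set 'I_n}) x0 (G : (h.+1).-tuple 'S_n) j : Inv E x0 G -> (j <= h)%N ->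
  inC E x0 (vtx G j).
Proof.
move=> I; elim: j => [|j IH] jh; first by case: I => _ -> _.
have [a [b [ab aE bE Ej]]] := Inv_label I jh.
by rewrite vtxS Ej; apply: C_tperm => //; apply: IH; apply: ltnW.
Qed.

Lemma exists_split1 h i (L L' : nat -> bool) : (0 < i < h)%N ->
  (forall j, j != i.-1 -> j != i -> L j = L' j) -> (L i.-1 || L i) = (L' i.-1 || L' i) ->
  [exists j : 'I_h, L j] -> [exists j : 'I_h, L' j].
Proof.
move=> /andP [i0 ih] Hs Hp /existsP [j Lj].
have i1h : (i.-1 < h)%N by apply: leq_ltn_trans ih; apply: leq_pred.
case: (eqVneq (j : nat) i.-1) => [Ej|j1].
  have : L' i.-1 || L' i by rewrite -Hp -Ej Lj.
  by case/orP => H; apply/existsP; [exists (Ordinal i1h)|exists (Ordinal ih)].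
case: (eqVneq (j : nat) i) => [Ej|j2].
  have : L' i.-1 || L' i by rewrite -Hp -Ej Lj orbT.
  by case/orP => H; apply/existsP; [exists (Ordinal i1h)|exists (Ordinal ih)].
by apply/existsP; exists j; rewrite -Hs.
Qed.

Lemma exists_split h i (L L' : nat -> bool) : (0 < i < h)%N ->
  (forall j, j != i.-1 -> j != i -> L j = L' j) -> (L i.-1 || L i) = (L' i.-1 || L' i) ->
  [exists j : 'I_h, L j] = [exists j : 'I_h, L' j].
Proof.
move=> ih Hs Hp; apply/idP/idP; apply: (exists_split1 ih) => //.
by move=> j j1 j2; rewrite Hs.
Qed.

Lemma ell_ne1 n (X Z W : 'S_n) : bedge X Z -> bedge Z W -> X^-1 * W != 1.
Proof.
move=> e1 e2; apply/negP => /eqP E; have EW : W = X by rewrite -[W](mulKVg X) E mulg1.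
by move: (ltn_trans (bedge_lt e1) (bedge_lt e2)); rewrite EW ltnn.
Qed.

Lemma flip_inv n h (E : {set 'I_n}) x0 (G : (h.+1).-tuple 'S_n) i : Inv E x0 G -> Inv E x0 (flip_at i G).
Proof.
move=> I; case: (boolP (0 < i < h)%N) => ih; last by rewrite flip_out.
case Ep: [pick z | midp (vtx G i.-1) (vtx G i.+1) (vtx G i) z] => [z|]; last by rewrite flip_atN.
have Hz : midp (vtx G i.-1) (vtx G i.+1) (vtx G i) z.
  by move: Ep; case: pickP => // z' H [<-].
have V := flip_atE ih Ep.
case: I => bp v0 EE.
case/andP: ih => i0 ih.
have i1h : (i.-1 < h)%N by apply: leq_ltn_trans ih; apply: leq_pred.
have ii : i.-1.+1 = i by rewrite prednK.
have ne1 : (i.-1 == i) = false by apply/eqP; lia.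
have ne2 : (i.+1 == i) = false by apply/eqP; lia.
case/andP: Hz => /andP [zZ e1] e2.
have f1 := bpath_edge bp i1h; rewrite ii in f1.
have f2 := bpath_edge bp ih.
split.
- move=> j; rewrite !V.
  case: (eqVneq (j : nat).+1 i) => [Ej|j1].
    have -> : (j : nat) = i.-1 by rewrite -Ej.
    by rewrite ne1.
  case: (eqVneq (j : nat) i) => [Ej|j2]; first by rewrite Ej ?eqxx ?ne2.
  by apply: bp.
- by rewrite V; case: eqP i0 => // <-.
- rewrite -EE; apply/setP => a; rewrite !inE.
  apply: (@exists_split h i (fun j => label (flip_at i G) j a != a) (fun j => label G j a != a)).
  + by rewrite i0.
  + move=> j j1 j2; rewrite /label !V (negbTE j2).
    case: (eqVneq j.+1 i) => [Ej|//]; move: j1; rewrite -Ej /= eqxx //.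
  + rewrite /label !V ii eqxx ne1 ne2.
    rewrite !supp_prod.
    * by rewrite !mulgA !mulgK.
    * by case/andP: f1.
    * by case/andP: f2.
    * by rewrite mulgA mulgK; apply: ell_ne1 f1 f2.
    * by case/andP: e1.
    * by case/andP: e2.
    * by rewrite mulgA mulgK; apply: ell_ne1 e1 e2.
Qed.

Lemma flips_inv n h (E : {set 'I_n}) x0 (G : (h.+1).-tuple 'S_n) s :
  Inv E x0 G -> Inv E x0 (flips s G).
Proof. by elim: s G => [|i s IH] G I //=; apply: IH; apply: flip_inv. Qed.

Lemma chain_decomp k (X y W : 'S_k) (Q : pred 'I_k) : bedge X y -> bedge y W ->
  (forall a, (X^-1 * W) a != a -> Q a) ->
  exists a b c d, [/\ a != b, c != d, [&& Q a, Q b, Q c & Q d], y = X * tperm a b & W = y * tperm c d].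
Proof.
move=> e1 e2 HQ.
have [a [b [ab Ey]]] := bedge_transp e1.
have [c [d [cd EW]]] := bedge_transp e2.
have ne := ell_ne1 e1 e2.
have Epi : X^-1 * W = tperm a b * tperm c d by rewrite EW Ey mulgA mulKg.
have mv u : (tperm a b u != u) || (tperm c d u != u) -> Q u.
  move=> H; apply: HQ; rewrite Epi -supp_prod ?is_transp_tperm //.
  by rewrite -Epi.
exists a, b, c, d; split => //.
apply/and4P; split; apply: mv.
- by apply/orP; left; rewrite tpermL eq_sym.
- by apply/orP; left; rewrite tpermR.
- by apply/orP; right; rewrite tpermL eq_sym.
- by apply/orP; right; rewrite tpermR.
Qed.

Lemma tuple_eq_vtx n h (G1 G2 : (h.+1).-tuple 'S_n) :
  (forall j, (j <= h)%N -> vtx G1 j = vtx G2 j) -> G1 = G2.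
Proof. by move=> H; apply: eq_from_tnth => k; rewrite !(tnth_nth 1); apply: H; rewrite -ltnS. Qed.

Lemma flip_comm n m h (E : {set 'I_n}) x0 (G : (h.+1).-tuple 'S_n) i :
  (#|E| <= m)%N -> Inv E x0 G ->
  map_tuple (fm m E x0) (flip_at i G) = flip_at i (map_tuple (fm m E x0) G).
Proof.
move=> hm I; set f := fm m E x0.
case: (boolP (0 < i < h)%N) => ih; last by rewrite !flip_out.
have /andP [i0 ih'] := ih.
set X := vtx G i.-1; set Z0 := vtx G i; set W := vtx G i.+1.
have CX : inC E x0 X by apply: vtx_C I _; lia.
have CZ : inC E x0 Z0 by apply: vtx_C I _; lia.
have CW : inC E x0 W by apply: vtx_C I _; lia.
have bp : is_bpath G by case: I.
have eX : bedge X Z0.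
  have H : (i.-1 < h)%N by lia.
  by have := bpath_edge bp H; rewrite prednK.
have eW : bedge Z0 W := bpath_edge bp ih'.
have mX : vtx (map_tuple f G) i.-1 = f X by apply: vtx_map; lia.
have mZ : vtx (map_tuple f G) i = f Z0 by apply: vtx_map; lia.
have mW : vtx (map_tuple f G) i.+1 = f W by apply: vtx_map; lia.
have QE a : (X^-1 * W) a != a -> a \in E.
  by move=> H; case: (boolP (a \in E)) => // aE; move: H; rewrite (C_fix CX CW aE) eqxx.
have Qm (r : 'I_m) : ((f X)^-1 * f W) r != r -> (r < #|E|)%N.
  by move=> H; rewrite ltnNge; apply/negP => hr; move: H; rewrite fm_mulfix ?eqxx.
have A z : midp X W Z0 z -> midp (f X) (f W) (f Z0) (f z).
  case/andP => /andP [zZ e1] e2.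
  have [a [b [c [d [ab cd /and4P [aE bE cE dE] Ez EW]]]]] := chain_decomp e1 e2 QE.
  have Cz : inC E x0 z by rewrite Ez; apply: C_tperm.
  have [r1 E1] := ro hm aE; have [r2 E2] := ro hm bE.
  have [r3 E3] := ro hm cE; have [r4 E4] := ro hm dE.
  have fz : f z = f X * tperm r1 r2 by rewrite Ez; apply: fm_tperm.
  have fW : f W = f z * tperm r3 r4 by rewrite EW; apply: fm_tperm.
  apply/andP; split; first (apply/andP; split).
  - by apply: contra zZ => /eqP H; apply/eqP; apply: (fm_inj hm Cz CZ H).
  - by rewrite fz -(bedge_fm hm CX aE bE E1 E2) -Ez.
  - by rewrite fW -(bedge_fm hm Cz cE dE E3 E4) -EW.
have B z' : midp (f X) (f W) (f Z0) z' -> exists z, midp X W Z0 z /\ f z = z'.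
  case/andP => /andP [zZ e1] e2.
  have [r1 [r2 [r3 [r4 [r12 r34 /and4P [h1 h2 h3 h4] Ez EW]]]]] := chain_decomp e1 e2 Qm.
  have [a aE Ea] := rk_surj h1; have [b bE Eb] := rk_surj h2.
  have [c cE Ec] := rk_surj h3; have [d dE Ed] := rk_surj h4.
  set z := X * tperm a b.
  have Cz : inC E x0 z by apply: C_tperm.
  have fz : f z = z' by rewrite Ez; apply: fm_tperm.
  have fW' : f (z * tperm c d) = f W by rewrite EW -fz; apply: fm_tperm.
  have EW' : z * tperm c d = W by apply: (fm_inj hm _ CW fW'); apply: C_tperm.
  exists z; split => //; apply/andP; split; first (apply/andP; split).
  - by apply: contra zZ => /eqP H; rewrite -fz H.
  - by rewrite /z (bedge_fm hm CX aE bE (esym Ea) (esym Eb)) -Ez.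
  - by rewrite -EW' (bedge_fm hm Cz cE dE (esym Ec) (esym Ed)) -/f fz -EW.
have U z1 z2 : midp X W Z0 z1 -> midp X W Z0 z2 -> z1 = z2.
  move=> /andP [/andP [n1 a1] b1] /andP [/andP [n2 a2] b2].
  apply/eqP; apply/negP => /negP n12.
  by apply: (mid_unique eX eW a1 b1 a2 b2) => //; rewrite eq_sym.
case Ep: [pick z | midp X W Z0 z] => [z|].
- have Hz : midp X W Z0 z by move: Ep; case: pickP => // z' H [<-].
  have Ep' : [pick z | midp (vtx (map_tuple f G) i.-1) (vtx (map_tuple f G) i.+1)
                              (vtx (map_tuple f G) i) z] = Some (f z).
    rewrite mX mW mZ; case: pickP => [z' Hz'|Hn].
      by have [z2 [H2 <-]] := B _ Hz'; rewrite (U _ _ H2 Hz).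
    by have := Hn (f z); rewrite (A _ Hz).
  apply: tuple_eq_vtx => j jh.
  rewrite vtx_map // (flip_atE ih Ep) (flip_atE ih Ep').
  by case: eqP => // _; rewrite vtx_map.
- rewrite (flip_atN Ep) flip_atN // mX mW mZ.
  case: pickP => // z' Hz'; have [z [Hz _]] := B _ Hz'.
  by move: Ep; case: pickP => // /(_ z); rewrite Hz.
Qed.

Fixpoint Nl n h (G : (h.+1).-tuple 'S_n) (a0 : 'I_n) (k : nat) : {set 'I_n} :=
  if k is k'.+1 then Nl G a0 k' :|: [set b | [exists c in Nl G a0 k', Gadj G c b]]
  else [set a0].

Definition Jl n h (G : (h.+1).-tuple 'S_n) (a0 : 'I_n) (k : nat) : {set 'I_h} :=
  [set j : 'I_h | [exists a in Nl G a0 k, exists b in Nl G a0 k, (a != b) && (label G j == tperm a b)]].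

Lemma Nl_mono n h (G : (h.+1).-tuple 'S_n) a0 k l : (k <= l)%N -> Nl G a0 k \subset Nl G a0 l.
Proof.
elim: l => [|l IH]; first by rewrite leqn0 => /eqP ->.
rewrite leq_eqVlt => /orP [/eqP ->|kl]; first by [].
apply: subset_trans (IH kl) _; exact: subsetUl.
Qed.

Lemma Jl_mono n h (G : (h.+1).-tuple 'S_n) a0 k : Jl G a0 k \subset Jl G a0 k.+1.
Proof.
apply/subsetP => j; rewrite !inE => /existsP [a /andP [aN /existsP [b /andP [bN H]]]].
have S := Nl_mono G a0 (leqnSn k).
by apply/existsP; exists a; rewrite (subsetP S _ aN); apply/existsP; exists b; rewrite (subsetP S _ bN).
Qed.

Lemma card_sub_split (T : finType) (A B : {set T}) : A \subset B -> #|B| = #|A| + #|B :\: A|.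
Proof. by move=> AB; rewrite -(cardsID A B) (setIidPr AB). Qed.

Lemma Nl_card n h (G : (h.+1).-tuple 'S_n) a0 k : (#|Nl G a0 k| <= 1 + #|Jl G a0 k|)%N.
Proof.
elim: k => [|k IH]; first by rewrite /= cards1.
set Nk := Nl G a0 k; set Nk1 := Nl G a0 k.+1.
have S : Nk \subset Nk1 := Nl_mono G a0 (leqnSn k).
rewrite (card_sub_split S) (card_sub_split (Jl_mono G a0 k)) addnA.
apply: leq_add => //.
pose P b (j : 'I_h) := [exists c in Nk, (c != b) && (label G j == tperm c b)].
pose phi b := [pick j | P b j].
have Pex b : b \in Nk1 :\: Nk -> exists j, P b j.
  rewrite !inE => /andP [bNk /orP [bN|]]; first by rewrite bN in bNk.
  move=> /existsP [c /andP [cN /andP [cb /existsP [j Hj]]]].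
  by exists j; apply/existsP; exists c; rewrite cN cb.
have Pj b j : b \in Nk1 :\: Nk -> P b j -> j \in Jl G a0 k.+1 :\: Jl G a0 k.
  move=> bD /existsP [c /andP [cN /andP [cb /eqP Hj]]].
  have cN1 : c \in Nk1 by rewrite (subsetP S).
  move: bD; rewrite inE => /andP [bNk bN1].
  rewrite !inE; apply/andP; split.
    apply/negP => /existsP [a' /andP [a'N /existsP [b' /andP [b'N /andP [ab' /eqP H]]]]].
    move: H; rewrite Hj => /(tperm_pair cb) [[_ Eb]|[_ Eb]].
      by rewrite Eb b'N in bNk.
    by rewrite Eb a'N in bNk.
  apply/existsP; exists c; rewrite cN1; apply/existsP; exists b; rewrite bN1 cb /=.
  by rewrite Hj.
have phiS b : b \in Nk1 :\: Nk -> exists2 j, phi b = Some j & P b j.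
  move=> bD; rewrite /phi; case: pickP => [j Hj|Hn]; first by exists j.
  by have [j Hj] := Pex b bD; move: (Hn j); rewrite Hj.
have inj : {in Nk1 :\: Nk &, injective phi}.
  move=> b1 b2 D1 D2 E.
  have [j1 E1 H1] := phiS _ D1; have [j2 E2 H2] := phiS _ D2.
  move: E; rewrite E1 E2 => [[Ej]]; rewrite -Ej in H2.
  move: H1 H2 => /existsP [c1 /andP [c1N /andP [cb1 /eqP L1]]].
  move=> /existsP [c2 /andP [c2N /andP [cb2 /eqP L2]]].
  move: L2; rewrite L1 => /(tperm_pair cb1) [[_ ->]|[Ec1 _]] //.
  by move: D2; rewrite !inE -Ec1 c1N.
rewrite -(card_in_imset inj) -[X in (_ <= X)%N](card_imset _ (@Some_inj _)).
apply: subset_leq_card; apply/subsetP => o /imsetP [b bD ->].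
have [j Ej Hj] := phiS _ bD; rewrite Ej; apply: imset_f; exact: Pj bD Hj.
Qed.

Lemma Nl_path n h (G : (h.+1).-tuple 'S_n) a0 p : forall x k, x \in Nl G a0 k ->
  path (Gadj G) x p -> last x p \in Nl G a0 (k + size p).
Proof.
elim: p => [|y p IH] x k xN /=; first by rewrite addn0.
case/andP => xy py; rewrite -addSnnS; apply: IH py.
by rewrite /= !inE; apply/orP; right; apply/existsP; exists x; rewrite xN.
Qed.

Lemma conn_bound n h (G : (h.+1).-tuple 'S_n) : Gconnected G -> (#|Eset G| <= h.+1)%N.
Proof.
move=> Hc; case: (set_0Vmem (Eset G)) => [->|[a0 a0E]]; first by rewrite cards0.
have sub : Eset G \subset Nl G a0 n.
  apply/subsetP => b bE; have /connectP [p0 pp0 Eb] := Hc _ _ a0E bE.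
  rewrite Eb; case: (shortenP pp0) => p pp up _.
  have Hs : (size p < n)%N.
    have := uniq_leq_size up (fun x _ => mem_enum 'I_n x).
    by rewrite size_enum_ord.
  apply: (subsetP (Nl_mono G a0 (ltnW Hs))).
  by have := @Nl_path n h G a0 p a0 0 (set11 a0) pp.
apply: leq_trans (subset_leq_card sub) _.
apply: leq_trans (Nl_card G a0 n) _.
by rewrite add1n ltnS -[X in (_ <= X)%N](card_ord h) max_card.
Qed.

Lemma main_gen h n m (F : {set (h.+1).-tuple 'S_n}) (Gam : (h.+1).-tuple 'S_n) :
  is_flipclass F -> Gam \in F -> (#|Eset Gam| <= m)%N ->
  exists F' : {set (h.+1).-tuple 'S_m}, is_flipclass F' /\ flip_iso F F'.
Proof.
case=> G0 [bp0 HF] GamF hm.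
set x0 := vtx G0 0; set E := Eset G0.
have I0 : Inv E x0 G0 by [].
have IF G : G \in F -> Inv E x0 G by case/HF => s [_ ->]; apply: flips_inv.
have EGam : Eset Gam = E by case: (IF _ GamF).
rewrite EGam in hm.
set f := fm m E x0.
set F' := [set map_tuple f G | G in F].
pose g := fun t : 'S_n => (f x0)^-1 * f (x0 * t).
have flipsC s (G : (h.+1).-tuple 'S_n) : Inv E x0 G -> flips s (map_tuple f G) = map_tuple f (flips s G).
  elim: s G => [|i s IH] G I //=.
  by rewrite -flip_comm // IH //; apply: flip_inv.
have gE a b (r1 r2 : 'I_m) : a \in E -> b \in E -> (r1 : nat) = rk E a -> (r2 : nat) = rk E b ->
    g (tperm a b) = tperm r1 r2.
  by move=> aE bE E1 E2; rewrite /g /f (fm_tperm hm (@inC_refl n E x0) aE bE E1 E2) mulKg.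
have labelg (G : (h.+1).-tuple 'S_n) j : Inv E x0 G -> (j < h)%N -> exists a b (r1 r2 : 'I_m),
    [/\ a != b, a \in E, b \in E, label G j = tperm a b & 
     [/\ (r1 : nat) = rk E a, (r2 : nat) = rk E b & label (map_tuple f G) j = tperm r1 r2]].
  move=> I jh; have [a [b [ab aE bE Ej]]] := Inv_label I jh.
  have [r1 E1] := ro hm aE; have [r2 E2] := ro hm bE.
  exists a, b, r1, r2; split => //; split => //.
  rewrite /label !vtx_map // ?(ltnW jh) // vtxS Ej.
  by rewrite /f (fm_tperm hm (vtx_C I (ltnW jh)) aE bE E1 E2) mulKg.
have labelF t : t \in labels F -> exists a b, [/\ a != b, a \in E, b \in E & t = tperm a b].
  rewrite inE => /existsP [G /andP [GF /existsP [j /eqP ->]]].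
  by have [a [b [ab aE bE Ej]]] := Inv_label (IF _ GF) (ltn_ord j); exists a, b.
have vertsC x : x \in verts F -> inC E x0 x.
  rewrite inE => /existsP [G /andP [GF xG]].
  have [j jh <-] := (nthP 1 xG); apply: (vtx_C (IF _ GF)).
  by move: jh; rewrite size_tuple.
exists F'; split.
  exists (map_tuple f G0); split.
    move=> j; have [a [b [r1 [r2 [ab aE bE Ej [E1 E2 Ej']]]]]] := labelg _ _ I0 (ltn_ord j).
    rewrite vtxS Ej' !vtx_map // ?(ltnW (ltn_ord j)) //.
    rewrite -(bedge_fm hm (vtx_C I0 (ltnW (ltn_ord j))) aE bE E1 E2) -Ej -vtxS.
    exact: bp0.
  move=> G; split.
    case/imsetP => G1 /HF [s [sv ->]] ->; exists s; split => //.
    by rewrite flipsC.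
  case=> s [sv ->]; rewrite flipsC //; apply: imset_f; apply/HF; by exists s.
exists f, g; split; last split.
- split => //.
  + move=> x y xV yV; exact: fm_inj hm (vertsC _ xV) (vertsC _ yV).
  + apply/setP => y; apply/imsetP/idP.
      case=> x; rewrite inE => /existsP [G /andP [GF xG]] ->.
      rewrite inE; apply/existsP; exists (map_tuple f G); rewrite imset_f //=.
      by apply: map_f.
    rewrite inE => /existsP [G' /andP [/imsetP [G GF ->] yG]].
    move: yG => /mapP [x xG ->]; exists x => //.
    by rewrite inE; apply/existsP; exists G; rewrite GF.
- by move=> G i GF _; apply: flip_comm => //; apply: IF.
- split.
  + move=> t1 t2 /labelF [a1 [b1 [ab1 a1E b1E ->]]] /labelF [a2 [b2 [ab2 a2E b2E ->]]].
    have [r1 E1] := ro hm a1E; have [r2 E2] := ro hm b1E.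
    have [r3 E3] := ro hm a2E; have [r4 E4] := ro hm b2E.
    rewrite (gE _ _ _ _ a1E b1E E1 E2) (gE _ _ _ _ a2E b2E E3 E4).
    have r12 : r1 != r2.
      by apply: contra ab1 => /eqP H; apply/eqP; apply: (rk_inj a1E b1E); rewrite -E1 -E2 H.
    case/(tperm_pair r12) => [[H1 H2]|[H1 H2]].
    * have -> : a1 = a2 by apply: (rk_inj a1E a2E); rewrite -E1 -E3 H1.
      have -> : b1 = b2 by apply: (rk_inj b1E b2E); rewrite -E2 -E4 H2.
      by [].
    * have -> : a1 = b2 by apply: (rk_inj a1E b2E); rewrite -E1 -E4 H1.
      have -> : b1 = a2 by apply: (rk_inj b1E a2E); rewrite -E2 -E3 H2.
      by rewrite tpermC.
  + apply/setP => y; apply/imsetP/idP.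
      case=> t; rewrite inE => /existsP [G /andP [GF /existsP [j /eqP ->]]] ->.
      have [a [b [r1 [r2 [ab aE bE Ej [E1 E2 Ej']]]]]] := labelg _ _ (IF _ GF) (ltn_ord j).
      rewrite inE; apply/existsP; exists (map_tuple f G); rewrite imset_f //=.
      by apply/existsP; exists j; rewrite Ej (gE _ _ _ _ aE bE E1 E2) Ej'.
    rewrite inE => /existsP [G' /andP [/imsetP [G GF ->] /existsP [j /eqP ->]]].
    have [a [b [r1 [r2 [ab aE bE Ej [E1 E2 Ej']]]]]] := labelg _ _ (IF _ GF) (ltn_ord j).
    exists (label G j); last by rewrite Ej (gE _ _ _ _ aE bE E1 E2) Ej'.
    by rewrite inE; apply/existsP; exists G; rewrite GF; apply/existsP; exists j.
  + move=> G j GF.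
    have [a [b [r1 [r2 [ab aE bE Ej [E1 E2 Ej']]]]]] := labelg _ _ (IF _ GF) (ltn_ord j).
    by rewrite Ej (gE _ _ _ _ aE bE E1 E2) Ej'.
  + move=> t1 t2 /labelF [a [b [ab aE bE Et1]]] /labelF [c [d [cd cE dE Et2]]].
    case=> [a1 [b1 [a2 [b2 [ab1 [ab2 [E1 [E2 Hl]]]]]]]].
    have inE1 : a1 \in E /\ b1 \in E.
      have ab1' : a1 != b1 by rewrite neq_ltn ab1.
      move: Et1; rewrite E1 => /(tperm_pair ab1') [[-> ->]|[-> ->]]; by [].
    have inE2 : a2 \in E /\ b2 \in E.
      have ab2' : a2 != b2 by rewrite neq_ltn ab2.
      move: Et2; rewrite E2 => /(tperm_pair ab2') [[-> ->]|[-> ->]]; by [].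
    case: inE1 => a1E b1E; case: inE2 => a2E b2E.
    have [r1 R1] := ro hm a1E; have [r2 R2] := ro hm b1E.
    have [r3 R3] := ro hm a2E; have [r4 R4] := ro hm b2E.
    exists r1, r2, r3, r4.
    rewrite E1 E2 (gE _ _ _ _ a1E b1E R1 R2) (gE _ _ _ _ a2E b2E R3 R4).
    split; first by rewrite R1 R2 rk_ltE.
    split; first by rewrite R3 R4 rk_ltE.
    split => //; split => //.
    case: Hl => [H|[H H']]; [left|right].
    * by rewrite R1 R3 rk_ltE.
    * have Ea : a1 = a2 by apply: ord_inj.
      by rewrite R1 R3 Ea R2 R4 rk_ltE.
Qed.

Local Close Scope group_scope.

Theorem theorem6p12 (h n : nat) (F : {set (h.+1).-tuple 'S_n})
    (Gam : (h.+1).-tuple 'S_n) :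
  is_flipclass F -> Gam \in F ->
  (exists F' : {set (h.+1).-tuple 'S_(#|Eset Gam|)},
      is_flipclass F' /\ flip_iso F F') /\
  (Gconnected Gam ->
     exists F' : {set (h.+1).-tuple 'S_(h.+1)},
      is_flipclass F' /\ flip_iso F F').
Proof.
move=> HF GF; split; first exact: main_gen HF GF (leqnn _).
by move=> Hc; apply: main_gen HF GF (conn_bound Hc).
Qed.
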